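(* Let $X$ be a metric space, $\mathcal M=\{M_1,\dots,M_n\}\subset\mathcal P^f_{\mathrm{Cl}}(X)$, $\Sigma(\mathcal M)\ne\emptyset$ and $d\in\Omega(\mathcal M)$. Then $K_d\in\Sigma_d(\mathcal M)$ and $K\subset K_d$ for every $K\in\Sigma_d(\mathcal M)$; i.e. $K_d$ is the greatest element of $\Sigma_d(\mathcal M)$ with respect to inclusion.
   Context: For a metric space $X$, $p\in X$, $A\subset X$: $|p\,A|=\inf_{a\in A}|p\,a|$ ($=\infty$ if $A=\emptyset$); for $0\le r<\infty$, $B_r(A)=\{p:|p\,A|\le r\}$. For nonempty $A,B$, $d_H(A,B)=\max\{\sup_{a\in A}|a\,B|,\sup_{b\in B}|b\,A|\}\in[0,\infty]$. $\mathcal P_{\mathrm{Cl}}(X)$ is the set of nonempty closed subsets of $X$ with $d_H$. A finiteness class of $\mathcal P_{\mathrm{Cl}}(X)$ is an equivalence class of the relation $A\sim B\iff d_H(A,B)<\infty$; $\mathcal P^f_{\mathrm{Cl}}(X)$ denotes a fixed finiteness class. For finite $\mathcal M=\{M_1,\dots,M_n\}\subset\mathcal P^f_{\mathrm{Cl}}(X)$, set $S_{\mathcal M}(Y)=\sum_{i=1}^n d_H(Y,M_i)$ for $Y\in\mathcal P^f_{\mathrm{Cl}}(X)$; $\Sigma(\mathcal M)$ is the set of all minimizers of $S_{\mathcal M}$ over $\mathcal P^f_{\mathrm{Cl}}(X)$. For $K\in\Sigma(\mathcal M)$, $d(K)=(d_H(K,M_1),\dots,d_H(K,M_n))$; $\Omega(\mathcal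 M)=\{d(K):K\in\Sigma(\mathcal M)\}$; for $d=(d_1,\dots,d_n)\in\Omega(\mathcal M)$, $\Sigma_d(\mathcal M)=\{K\in\Sigma(\mathcal M):d(K)=d\}$, partially ordered by inclusion; and $K_d=\bigcap_{i=1}^n B_{d_i}(M_i)$. *)

(* Defs.v *)
From HB Require Import structures.
From mathcomp Require Import all_boot all_order all_algebra.
From mathcomp Require Import all_classical all_reals.
From mathcomp Require Import ereal.
Set Implicit Arguments. Unset Strict Implicit. Unset Printing Implicit Defensive.
Import Order.TTheory GRing.Theory Num.Theory.
Local Open Scope classical_set_scope.
Local Open Scope ring_scope.

Section Defs.
Variables (R : realType) (T : Type) (dist : T -> T -> R).

Definition is_metric : Prop :=
  [/\ forall x y, 0 <= dist x y,
      forall x y, dist x y = 0 <-> x = y,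
      forall x y, dist x y = dist y x &
      forall x y z, dist x z <= dist x y + dist y z].

Definition mopen (U : set T) : Prop :=
  forall x, U x -> exists r : R, 0 < r /\ [set y | dist x y < r] `<=` U.
Definition mclosed (A : set T) : Prop := mopen (~` A).

(* |p A| = inf_{a in A} |p a|  (= +oo when A is empty) *)
Definition dist_pt (p : T) (A : set T) : \bar R :=
  ereal_inf [set (dist p a)%:E | a in A].

Definition mball (r : R) (A : set T) : set T :=
  [set p | (dist_pt p A <= r%:E)%E].

Definition dH (A B : set T) : \bar R :=
  Order.max (ereal_sup [set dist_pt a B | a in A])
            (ereal_sup [set dist_pt b A | b in B]).

Definition PCl (A : set T) : Prop := mclosed A /\ A !=set0.

(* the finiteness class of P_Cl(X) containing F0 *)
Definition in_class (F0 Y : set T) : Prop := PCl Y /\ (dH Y F0 < +oo)%E.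

Variables (F0 : set T) (n : nat) (M : 'I_n -> set T).

Definition SM (Y : set T) : \bar R := (\sum_(i < n) dH Y (M i))%E.

Definition Sigma (K : set T) : Prop :=
  in_class F0 K /\ forall Y, in_class F0 Y -> (SM K <= SM Y)%E.

(* d(K) = (d_H(K, M_1), ..., d_H(K, M_n)) (finite for K in the class) *)
Definition dvec (K : set T) : 'I_n -> R := fun i => fine (dH K (M i)).

Definition Omega (d : 'I_n -> R) : Prop := exists K, Sigma K /\ dvec K = d.

Definition Sigma_d (d : 'I_n -> R) (K : set T) : Prop := Sigma K /\ dvec K = d.

Definition Kd (d : 'I_n -> R) : set T := [set p | forall i, mball (d i) (M i) p].

End Defs.

(* Main.v *)
Require Import Defs.
From mathcomp Require Import all_boot all_order all_algebra.
From mathcomp Require Import all_classical all_reals.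
From mathcomp Require Import ereal.
From mathcomp Require Import lra.
Import Order.TTheory GRing.Theory Num.Theory.
Local Open Scope classical_set_scope.
Local Open Scope ring_scope.

Set Implicit Arguments. Unset Strict Implicit.
Local Open Scope ereal_scope.

Lemma dp_ge0 (R : realType) (T : Type) (dist : T -> T -> R)
  (hd : is_metric dist) p A : 0 <= dist_pt dist p A.
Proof.
apply: le_ereal_inf_tmp => _ [a _ <-]; rewrite lee_fin; by case: hd.
Qed.

Lemma dp_le (R : realType) (T : Type) (dist : T -> T -> R) p (A : set T) a :
  A a -> dist_pt dist p A <= (dist p a)%:E.
Proof. by move=> Aa; apply: ereal_inf_lbound; exists a. Qed.

Lemma dp_anti (R : realType) (T : Type) (dist : T -> T -> R) p (A B : set T) :
  A `<=` B -> dist_pt dist p B <= dist_pt dist p A.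
Proof. by move=> AB; apply: le_ereal_inf => _ [a Aa <-]; exists a => //; apply: AB. Qed.

Lemma dp_lt (R : realType) (T : Type) (dist : T -> T -> R) p (A : set T) r :
  dist_pt dist p A < r%:E -> exists2 a, A a & (dist p a < r)%R.
Proof. by case/ereal_inf_lt => _ [a Aa <-]; rewrite lte_fin => ?; exists a. Qed.

Lemma dp_tri (R : realType) (T : Type) (dist : T -> T -> R)
  (hd : is_metric dist) p q A :
  dist_pt dist p A <= (dist p q)%:E + dist_pt dist q A.
Proof.
case E: (dist_pt dist q A) => [s| |].
- apply/lee_addgt0Pr => e e0.
  have : dist_pt dist q A < (s + e)%:E by rewrite E lte_fin ltrDl.
  move=> Hlt; have [a Aa lt] := @dp_lt _ _ _ _ _ _ Hlt.
  apply: le_trans (dp_le dist p Aa) _.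
  rewrite -!EFinD lee_fin.
  case: hd => _ _ _ tri; have := tri p q a; lra.
- by rewrite addey // leey.
- by have := dp_ge0 hd q A; rewrite E.
Qed.

Lemma mball_closed (R : realType) (T : Type) (dist : T -> T -> R)
  (hd : is_metric dist) r A : mclosed dist (mball dist r A).
Proof.
move=> p /= np.
have lt : r%:E < dist_pt dist p A by rewrite ltNge; apply/negP.
case E: (dist_pt dist p A) lt => [s| |] lt.
- exists (s - r)%R; split; first by rewrite subr_gt0 -lte_fin.
  move=> y /= hy hyb.
  have h := dp_tri hd p y A; rewrite E in h.
  have : s%:E <= (dist p y + r)%:E.
    by apply: le_trans h _; rewrite EFinD leeD2l.
  by rewrite lee_fin; lra.
- exists 1%R; split => // y /= hy hyb.
  have h := dp_tri hd p y A; rewrite E in h.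
  have : (dist p y)%:E + dist_pt dist y A <= (dist p y + r)%:E.
    by rewrite EFinD leeD2l.
  move=> h2; have := le_trans h h2; by rewrite leNgt ltry.
- by have := dp_ge0 hd p A; rewrite E.
Qed.

Lemma Kd_closed (R : realType) (T : Type) (dist : T -> T -> R)
  (hd : is_metric dist) n (M : 'I_n -> set T) d : mclosed dist (Kd dist M d).
Proof.
move=> p /= np.
have [i ni] : exists i, ~ mball dist (d i) (M i) p by apply/existsNP.
have [r [r0 sub]] := mball_closed hd ni.
exists r; split => // y hy Ky; apply: (sub y hy); apply: Ky.
Qed.

Lemma dH_le_l (R : realType) (T : Type) (dist : T -> T -> R) (K B : set T) a :
  K a -> dist_pt dist a B <= dH dist K B.
Proof. by move=> Ka; rewrite /dH le_max; apply/orP; left; apply: ereal_sup_ubound; exists a. Qed.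

Lemma dH_le_r (R : realType) (T : Type) (dist : T -> T -> R) (K B : set T) b :
  B b -> dist_pt dist b K <= dH dist K B.
Proof. by move=> Bb; rewrite /dH le_max; apply/orP; right; apply: ereal_sup_ubound; exists b. Qed.

Lemma dH_ge0 (R : realType) (T : Type) (dist : T -> T -> R)
  (hd : is_metric dist) (K B : set T) : K !=set0 -> 0 <= dH dist K B.
Proof. by case=> a Ka; apply: le_trans (dH_le_l dist B Ka); apply: dp_ge0. Qed.

Lemma dH_C (R : realType) (T : Type) (dist : T -> T -> R) (K B : set T) :
  dH dist K B = dH dist B K.
Proof. by rewrite /dH maxC. Qed.

Lemma dH_ub (R : realType) (T : Type) (dist : T -> T -> R) (K B : set T) c :
  (forall a, K a -> dist_pt dist a B <= c) ->
  (forall b, B b -> dist_pt dist b K <= c) -> dH dist K B <= c.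
Proof.
move=> h1 h2; rewrite /dH ge_max; apply/andP; split;
  apply: ge_ereal_sup => _ [a Ka <-]; auto.
Qed.

Local Close Scope ereal_scope.
Unset Implicit Arguments. Set Strict Implicit.

Theorem mainTheorem11 (R : realType) (T : Type) (dist : T -> T -> R)
  (hdist : is_metric dist) (F0 : set T) (hF0 : PCl dist F0)
  (n : nat) (hn : (0 < n)%N) (M : 'I_n -> set T)
  (hM : forall i, in_class dist F0 (M i))
  (hSigma : Sigma dist F0 M !=set0)
  (d : 'I_n -> R) (hd : Omega dist F0 M d) :
  Sigma_d dist F0 M d (Kd dist M d) /\
  (forall K, Sigma_d dist F0 M d K -> K `<=` Kd dist M d).
Proof.
have hF0c : in_class dist F0 F0.
  split => //.
  apply: (@le_lt_trans _ _ 0%E); last exact: ltry.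
  apply: dH_ub => a Fa; apply: le_trans (dp_le dist a Fa) _;
    by rewrite lee_fin; case: hdist => _ h _ _; rewrite (proj2 (h a a)).
have hdH : forall K, Sigma_d dist F0 M d K -> forall i, dH dist K (M i) = (d i)%:E.
  move=> K [[[[Kcl Kne] KF] Kmin] dK] i.
  have SMK : (SM dist M K < +oo)%E.
    apply: le_lt_trans (Kmin F0 hF0c) _.
    by apply: lte_sum_pinfty => j _; rewrite dH_C; exact: (hM j).2.
  have fin : (dH dist K (M i) < +oo)%E.
    apply: le_lt_trans _ SMK; rewrite /SM (bigD1 i) //=.
    by apply: lee_paddr => //; apply: sume_ge0 => j _; apply: dH_ge0.
  by rewrite -dK /dvec fineK // ge0_fin_numE // dH_ge0.
have part2 : forall K, Sigma_d dist F0 M d K -> K `<=` Kd dist M d.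
  move=> K hK p Kp i; rewrite /mball /= -(hdH K hK i); exact: dH_le_l.
split => //.
case: hd => K hK.
have KsubKd := part2 K hK.
have hdi := hdH K hK.
case: hK => [[[[Kcl Kne] KF] Kmin] dK].
have Kdne : Kd dist M d !=set0 by case: Kne => x Kx; exists x; apply: KsubKd.
pose i0 : 'I_n := Ordinal hn.
have d0 : (0 <= (d i0)%:E)%E by rewrite -hdi; apply: dH_ge0.
have hKdc : in_class dist F0 (Kd dist M d).
  split; first by split => //; apply: Kd_closed.
  apply: (@le_lt_trans _ _ ((d i0 + 1)%:E + dH dist (M i0) F0 + dH dist K F0)%E).
    apply: dH_ub => a Kda.
      apply: lee_paddr; first by apply: dH_ge0.
      have : (dist_pt dist a (M i0) < (d i0 + 1)%:E)%E.
        by apply: le_lt_trans (Kda i0) _; rewrite lte_fin ltrDl.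
      move=> Hlt; have [m Mm lt] := @dp_lt _ _ _ _ _ _ Hlt.
      apply: le_trans (dp_tri hdist a m F0) _.
      apply: leeD; first by rewrite lee_fin ltW.
      exact: dH_le_l.
    apply: lee_paddl.
      apply: adde_ge0; last by apply: dH_ge0 => //; exact: (hM i0).1.2.
      by rewrite lee_fin; rewrite lee_fin in d0; lra.
    apply: le_trans (dp_anti dist a KsubKd) _; exact: dH_le_r.
  apply: lte_add_pinfty => //; apply: lte_add_pinfty; [exact: ltry | exact: (hM i0).2].
have le_i : forall i, (dH dist (Kd dist M d) (M i) <= (d i)%:E)%E.
  move=> i; apply: dH_ub => [a Kda|b Mb]; first exact: Kda i.
  apply: le_trans (dp_anti dist b KsubKd) _; rewrite -hdi; exact: dH_le_r.
have SMle : (SM dist M (Kd dist M d) <= SM dist M K)%E.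
  by apply: lee_sum => i _; rewrite hdi.
split.
  split => // Y hY; exact: le_trans SMle (Kmin Y hY).
pose b i := fine (dH dist (Kd dist M d) (M i)).
have hb : forall i, dH dist (Kd dist M d) (M i) = (b i)%:E.
  move=> i; rewrite /b fineK // ge0_fin_numE; last exact: dH_ge0.
  by apply: le_lt_trans (le_i i) _; exact: ltry.
have hs := Kmin _ hKdc.
rewrite /SM in hs.
rewrite (eq_bigr (fun i => (d i)%:E)) in hs; last by move=> i _; rewrite hdi.
rewrite [X in (_ <= X)%E](eq_bigr (fun i => (b i)%:E)) in hs; last by move=> i _; rewrite hb.
rewrite !sumEFin lee_fin in hs.
have hbd : forall i, b i <= d i by move=> i; rewrite -lee_fin -hb.
have z : forall i, d i - b i = 0.
  move=> i; apply: (@psumr_eq0P _ _ xpredT (fun i => d i - b i)) => //.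
    by move=> j _; rewrite subr_ge0.
  apply/le_anti/andP; split.
    by rewrite sumrB subr_le0.
  by apply: sumr_ge0 => j _; rewrite subr_ge0.
apply/funext => i; rewrite /dvec -/(b i).
by have := z i; lra.
Qed.
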